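(* Let $H=\mathbb{R}^n$ be the (not necessarily orthogonal) direct sum of two subspaces $X$ and $Y$. If $\mathcal{F}_1$ is a frame for $X$ with the exact PR-redundancy property and $\mathcal{F}_2$ is a frame for $Y$ with the exact PR-redundancy property, then $\mathcal{F}=\mathcal{F}_1\cup\mathcal{F}_2$ is a frame for $H$ with the exact PR-redundancy property.
   Context: For a finite-dimensional real inner product space $V$ (here $V=X$, $Y$, or $H$ with the inner product inherited from $\mathbb{R}^n$), a frame $\mathcal{G}=\{g_i\}_{i=1}^N$ for $V$ is a finite sequence in $V$ spanning $V$. Let $\mathcal{S}_2(V)$ be the set of self-adjoint operators on $V$ of rank at most $2$, and for $\Lambda\subseteq\{1,\dots,N\}$ let $\Theta_{L(\mathcal{G}_\Lambda)}(A)=(\langle Ag_i,g_i\rangle)_{i\in\Lambda}$ for self-adjoint $A$ on $V$. $\mathcal{G}$ has the exact PR-redundancy property (as a frame for $V$) if for every proper subset $\Lambda\subsetneq\{1,\dots,N\}$, $\ker(\Theta_{L(\mathcal{G}_\Lambda)})\cap\mathcal{S}_2(V)\neq\ker(\Theta_{L(\mathcal{G})})\cap\mathcal{S}_2(V)$. The union $\mathcal{F}_1\cup\mathcal{F}_2$ means the concatenated sequence. *)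

(* Defs.v *)
From HB Require Import structures.
From mathcomp Require Import all_boot all_order all_algebra.
From mathcomp Require Import reals.
Set Implicit Arguments. Unset Strict Implicit. Unset Printing Implicit Defensive.
Import Order.TTheory GRing.Theory Num.Theory.
Local Open Scope ring_scope.

(* Conventions:
   - vectors of R^n are row vectors 'rV[R]_n; the standard inner product is
     <u, v> = (u *m v^T) 0 0.
   - a subspace V of R^n is the row space of a matrix V : 'M[R]_n.
   - a finite sequence {g_i}_{i<N} in R^n is the matrix G : 'M[R]_(N, n)
     whose i-th row is g_i; concatenation F1 \cup F2 is col_mx F1 F2.
   - a self-adjoint operator on V (for the inherited inner product) is
     represented by its canonical extension to R^n that is zero on V^perp:
     a symmetric n x n matrix whose row space is contained in V.  This is a
     bijection between self-adjoint operators on V and such matrices,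
     preserving rank and the quadratic form <A g, g> for g in V. *)

Definition inner (R : realType) (n : nat) (u v : 'rV[R]_n) : R :=
  (u *m v^T) 0 0.

Definition frame_for (R : realType) (n N : nat) (V : 'M[R]_n)
  (G : 'M[R]_(N, n)) : bool := (G == V)%MS.

Definition selfadj_on (R : realType) (n : nat) (V : 'M[R]_n) (A : 'M[R]_n)
  : bool := (A^T == A) && (A <= V)%MS.

(* ker(Theta_{L(G_Lambda)}) \cap S_2(V), as a predicate on representing
   matrices *)
Definition kerS2 (R : realType) (n N : nat) (V : 'M[R]_n)
  (G : 'M[R]_(N, n)) (L : {set 'I_N}) : pred 'M[R]_n :=
  fun A => [&& selfadj_on V A, (\rank A <= 2)%N &
              [forall i in L, inner (row i G *m A) (row i G) == 0]].

Definition exact_PR_redundancy (R : realType) (n N : nat) (V : 'M[R]_n)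
  (G : 'M[R]_(N, n)) : Prop :=
  forall L : {set 'I_N}, L \proper [set: 'I_N] ->
    kerS2 V G L <> kerS2 V G [set: 'I_N].

(* Main.v *)
Require Import Defs.
From HB Require Import structures.
From mathcomp Require Import all_boot all_order all_algebra.
From mathcomp Require Import reals.
From Stdlib Require Import Classical FunctionalExtensionality.
Import Order.TTheory GRing.Theory Num.Theory.
Local Open Scope ring_scope.
Set Implicit Arguments. Unset Strict Implicit.

Lemma witness (R : realType) (n N : nat) (V : 'M[R]_n) (G : 'M[R]_(N, n))
  (L : {set 'I_N}) :
  exact_PR_redundancy V G -> L \proper [set: 'I_N] ->
  exists A, kerS2 V G L A /\ ~~ kerS2 V G [set: 'I_N] A.
Proof.
move=> H HL; apply: NNPP => Hne; apply: (H L HL).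
apply: functional_extensionality => A.
apply/idP/idP => HA.
  apply/negPn/negP => HnA; apply: Hne; by exists A.
move: HA; rewrite /kerS2 => /and3P [h1 h2 /forall_inP h3].
apply/and3P; split => //; apply/forall_inP => i _; exact: h3.
Qed.

Lemma witness_row (R : realType) (n N : nat) (V : 'M[R]_n) (G : 'M[R]_(N, n))
  (L : {set 'I_N}) A :
  kerS2 V G L A -> ~~ kerS2 V G [set: 'I_N] A ->
  exists i, inner (row i G *m A) (row i G) != 0.
Proof.
rewrite /kerS2 => /and3P [h1 h2 _].
rewrite h1 h2 /= => /forall_inPn [i _ Hi]; by exists i.
Qed.

Lemma quadP (R : realType) (n : nat) (P A : 'M[R]_n) (g : 'rV[R]_n) :
  g *m (P *m A *m P^T) *m g^T = (g *m P) *m A *m (g *m P)^T.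
Proof. by rewrite trmx_mul !mulmxA. Qed.

Lemma symP (R : realType) (n : nat) (P A : 'M[R]_n) :
  A^T = A -> (P *m A *m P^T)^T == P *m A *m P^T.
Proof. by move=> hA; rewrite !trmx_mul trmxK hA mulmxA. Qed.

Section Ext.
Variables (R : realType) (n : nat) (V W : 'M[R]_n) (A : 'M[R]_n).
Hypothesis dVW : (V :&: W = 0)%MS.
Definition extB := proj_mx V W *m A *m (proj_mx V W)^T.

Lemma extB_inner (g : 'rV[R]_n) :
  inner (g *m extB) g = inner ((g *m proj_mx V W) *m A) (g *m proj_mx V W).
Proof. by rewrite /inner /extB quadP. Qed.

Lemma extB_V g : (g <= V)%MS -> inner (g *m extB) g = inner (g *m A) g.
Proof. by move=> h; rewrite extB_inner proj_mx_id. Qed.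

Lemma extB_W g : (g <= W)%MS -> inner (g *m extB) g = 0.
Proof. by move=> h; rewrite extB_inner proj_mx_0 // /inner !mul0mx mxE. Qed.

Lemma extB_selfadj : A^T = A -> selfadj_on 1%:M extB.
Proof.
move=> hA; by rewrite /selfadj_on submx1 andbT /extB symP.
Qed.

Lemma extB_rank : (\rank extB <= \rank A)%N.
Proof.
rewrite /extB; apply: leq_trans (mxrankM_maxl _ _) _; exact: mxrankM_maxr.
Qed.
End Ext.

Unset Implicit Arguments. Set Strict Implicit.

Theorem lemma1p8 (R : realType) (n N1 N2 : nat) (X Y : 'M[R]_n)
  (F1 : 'M[R]_(N1, n)) (F2 : 'M[R]_(N2, n)) :
  (addsmx X Y == 1%:M)%MS -> (capmx X Y <= (0 : 'M[R]_n))%MS ->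
  frame_for X F1 -> exact_PR_redundancy X F1 ->
  frame_for Y F2 -> exact_PR_redundancy Y F2 ->
  frame_for 1%:M (col_mx F1 F2) /\ exact_PR_redundancy 1%:M (col_mx F1 F2).
Proof.
move=> /eqmxP hXY; rewrite submx0 => /eqP dXY.
have dYX : (Y :&: X = 0)%MS by rewrite capmxC.
rewrite /frame_for => /eqmxP hF1 H1 /eqmxP hF2 H2.
have r1 : forall j, (row j F1 <= X)%MS by move=> j; rewrite -hF1 row_sub.
have r2 : forall j, (row j F2 <= Y)%MS by move=> j; rewrite -hF2 row_sub.
split.
  rewrite /eqmx submx1 /= -hXY -addsmxE.
  by apply: addsmxS; rewrite ?hF1 ?hF2.
move=> L HL.
have [i iL] : exists i, i \notin L.
  move/properP: HL => [_ [i _ hi]]; by exists i.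
set L1 := [set j | lshift N2 j \in L].
set L2 := [set j | rshift N1 j \in L].
case: (splitP i) => j ij.
- have ei : i = lshift N2 j by apply: val_inj.
  have [|A [hA hnA]] := @witness _ _ _ _ _ L1 H1.
    apply/properP; split; first exact: subsetT.
    by exists j; rewrite // inE -ei.
  have [k hk] := @witness_row _ _ _ _ _ _ _ hA hnA.
  move: (hA); rewrite /kerS2 => /and3P [/andP [/eqP hs _] hr /forall_inP hL].
  move=> Heq; have := congr1 (fun p => p (extB X Y A)) Heq.
  rewrite /kerS2 extB_selfadj // (leq_trans (@extB_rank _ _ _ _ A) hr) /=.
  have -> : [forall i0 in [set: 'I_(N1 + N2)],
     inner (row i0 (col_mx F1 F2) *m extB X Y A) (row i0 (col_mx F1 F2)) == 0] = false.
    apply/negbTE/forall_inPn; exists (lshift N2 k) => //.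
    by rewrite rowKu (@extB_V _ _ _ _ _ dXY _ (r1 k)).
  move/negbT/negP; apply; apply/forall_inP => i0 Hi0.
  case: (splitP i0) => j0 ij0.
  + have e : i0 = lshift N2 j0 by apply: val_inj.
    rewrite e rowKu (@extB_V _ _ _ _ _ dXY _ (r1 j0)); apply: hL; by rewrite inE -e.
  + have e : i0 = rshift N1 j0 by apply: val_inj.
    by rewrite e rowKd (@extB_W _ _ _ _ _ dXY _ (r2 j0)).
- have ei : i = rshift N1 j by apply: val_inj.
  have [|A [hA hnA]] := @witness _ _ _ _ _ L2 H2.
    apply/properP; split; first exact: subsetT.
    by exists j; rewrite // inE -ei.
  have [k hk] := @witness_row _ _ _ _ _ _ _ hA hnA.
  move: (hA); rewrite /kerS2 => /and3P [/andP [/eqP hs _] hr /forall_inP hL].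
  move=> Heq; have := congr1 (fun p => p (extB Y X A)) Heq.
  rewrite /kerS2 extB_selfadj // (leq_trans (@extB_rank _ _ _ _ A) hr) /=.
  have -> : [forall i0 in [set: 'I_(N1 + N2)],
     inner (row i0 (col_mx F1 F2) *m extB Y X A) (row i0 (col_mx F1 F2)) == 0] = false.
    apply/negbTE/forall_inPn; exists (rshift N1 k) => //.
    by rewrite rowKd (@extB_V _ _ _ _ _ dYX _ (r2 k)).
  move/negbT/negP; apply; apply/forall_inP => i0 Hi0.
  case: (splitP i0) => j0 ij0.
  + have e : i0 = lshift N2 j0 by apply: val_inj.
    by rewrite e rowKu (@extB_W _ _ _ _ _ dYX _ (r1 j0)).
  + have e : i0 = rshift N1 j0 by apply: val_inj.
    rewrite e rowKd (@extB_V _ _ _ _ _ dYX _ (r2 j0)); apply: hL; by rewrite inE -e.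
Qed.
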